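(* Let $n$ be a positive integer, $p_1,\dots,p_n$ distinct primes, and $(X,r)$ an indecomposable multipermutation solution of the YBE with $|X|=p_1\cdots p_n$. Then both $(X,r)$ and the solution $(\mathcal G(X,r),r_{\mathcal G})$ associated to the left brace $\mathcal G(X,r)$ have multipermutation level at most $n$.
   Context: A solution of the Yang–Baxter equation (YBE) is a pair $(X,r)$, where $X$ is a non-empty set and $r\colon X\times X\to X\times X$, written $r(x,y)=(\sigma_x(y),\gamma_y(x))$, satisfies: $r^2=\mathrm{id}$; all $\sigma_x,\gamma_y$ are bijections of $X$; and $r_{12}r_{23}r_{12}=r_{23}r_{12}r_{23}$ on $X^3$, where $r_{12}=r\times\mathrm{id}_X$, $r_{23}=\mathrm{id}_X\times r$. $\mathcal G(X,r)=\langle\sigma_x:x\in X\rangle\le\mathrm{Sym}_X$; $(X,r)$ is indecomposable if $\mathcal G(X,r)$ is transitive on $X$. Retract: $x\sim y\iff\sigma_x=\sigma_y$, inducing a solution $\mathrm{Ret}(X,r)$ on $X/{\sim}$; $\mathrm{Ret}^k$ is the $k$-fold iterate; $(X,r)$ is multipermutation if $|\mathrm{Ret}^k(X,r)|=1$ for some $k\ge1$, the least such $k$ being its multipermutation level. A left brace is a set $B$ with operations $+$ and $\circ$ (written $ab$) such that $(B,+)$ is an abelian group, $(B,\circ)$ is a group and $a(b+c)+a=ab+ac$; $\lambda_a(b)=-a+ab$. The solution associated to $B$ is $(B,r_B)$ with $r_B(a,b)=(\lambda_a(b),\lambda^{-1}_{\lambda_a(b)}(a))$. Brace structure on $\mathcal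 G(X,r)$: the structure group $G(X,r)=\langle x\in X\mid xy=\sigma_x(y)\gamma_y(x)\rangle$ is a left brace with additive group free abelian on $X$ and $\lambda_x(y)=\sigma_x(y)$; $x\mapsto\sigma_x$ extends to a group epimorphism $\phi\colon G(X,r)\to\mathcal G(X,r)$ with kernel $\{a: ab=a+b\ \forall b\}$, and $\mathcal G(X,r)$ carries the unique left brace structure making $\phi$ a brace homomorphism. *)

(* Defs.v *)
From HB Require Import structures.
From mathcomp Require Import all_boot all_fingroup.
Unset Printing Implicit Defensive.

Record sol := Sol { scar : finType; smap : scar * scar -> scar * scar }.

(* r(x,y) = (sigma_x(y), gamma_y(x)) *)
Definition ssig (S : sol) (x y : scar S) : scar S := (@smap S (x, y)).1.
Definition sgam (S : sol) (y x : scar S) : scar S := (@smap S (x, y)).2.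

Definition r12 (S : sol) (t : scar S * scar S * scar S) : scar S * scar S * scar S :=
  let: (x, y, z) := t in let: (a, b) := @smap S (x, y) in (a, b, z).
Definition r23 (S : sol) (t : scar S * scar S * scar S) : scar S * scar S * scar S :=
  let: (x, y, z) := t in let: (b, c) := @smap S (y, z) in (x, b, c).

Definition is_solution (S : sol) : Prop :=
  [/\ forall q, @smap S (@smap S q) = q,
      forall x, bijective (ssig S x),
      forall y, bijective (sgam S y) &
      forall t, r12 S (r23 S (r12 S t)) = r23 S (r12 S (r23 S t))].

Definition sigf (S : sol) (x : scar S) : {ffun scar S -> scar S} :=
  [ffun y => ssig S x y].
Definition retcls (S : sol) (x : scar S) : {set scar S} :=
  [set y | sigf S y == sigf S x].
Definition retsets (S : sol) : {set {set scar S}} := retcls S @: setT.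
Definition retT (S : sol) : finType := {C : {set scar S} | C \in retsets S}.
Definition rcls (S : sol) (x : scar S) : retT S :=
  @exist _ (fun C => C \in retsets S) (retcls S x) (imset_f (retcls S) (in_setT x)).
Definition retmap (S : sol) (q : retT S * retT S) : retT S * retT S :=
  match [pick x in val q.1], [pick y in val q.2] with
  | Some x, Some y => (rcls S (ssig S x y), rcls S (sgam S y x))
  | _, _ => q
  end.
Definition Ret (S : sol) : sol := @Sol (retT S) (@retmap S).

Definition multipermutation (S : sol) : Prop :=
  exists k, (0 < k)%N /\ #|{: scar (iter k Ret S)}| = 1%N.
Definition mpl_le (S : sol) (n : nat) : Prop :=
  exists k, (0 < k <= n)%N /\ #|{: scar (iter k Ret S)}| = 1%N.

Definition to_perm (T : finType) (f : T -> T) : {perm T} :=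
  insubd (1%g : {perm T}) [ffun x => f x].
Arguments to_perm {T}.
Definition sigma_perm (S : sol) (x : scar S) : {perm scar S} := to_perm (ssig S x).
Definition Ggrp (S : sol) : {group {perm scar S}} :=
  <<[set sigma_perm S x | x : scar S]>>%G.
Definition indecomposable (S : sol) : Prop :=
  [transitive Ggrp S, on [set: scar S] | 'P].

(* usual composition (g o h)(x) = g (h x); mathcomp's (h * g) x = g (h x) *)
Definition pcomp (T : finType) (g h : {perm T}) : {perm T} := (h * g)%g.

Record brace_data (T : finType) := BraceData {
  badd : {perm T} -> {perm T} -> {perm T};
  bopp : {perm T} -> {perm T};
  bzero : {perm T} }.
Arguments badd {T}. Arguments bopp {T}. Arguments bzero {T}.
Arguments pcomp {T}.

Arguments BraceData {T}.
Definition is_left_brace_on (T : finType) (G : {group {perm T}}) (B : brace_data T) : Prop :=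
  [/\ bzero B \in G,
      {in G &, forall a b, badd B a b \in G},
      {in G, forall a, bopp B a \in G} &
      {in G & G & G, forall a b c, badd B a (badd B b c) = badd B (badd B a b) c}] /\
  [/\       {in G &, forall a b, badd B a b = badd B b a},
      {in G, forall a, badd B (bzero B) a = a},
      {in G, forall a, badd B (bopp B a) a = bzero B} &
      {in G & G & G, forall a b c,
         badd B (pcomp a (badd B b c)) a = badd B (pcomp a b) (pcomp a c)}].

Definition blam (T : finType) (B : brace_data T) (a b : {perm T}) : {perm T} :=
  badd B (bopp B a) (pcomp a b).

Arguments is_left_brace_on {T}. Arguments blam {T}.
(* the solution associated to the brace (G,+,o):
   r(a,b) = (lambda_a(b), lambda_{lambda_a(b)}^{-1}(a)), using
   lambda_c^{-1} = lambda_{c^{-1}} *)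
Definition gT (T : finType) (G : {group {perm T}}) : finType := {g : {perm T} | g \in G}.
Arguments gT {T}.
Definition to_gT (T : finType) (G : {group {perm T}}) (g : {perm T}) : gT G :=
  insubd (@exist _ (fun g => g \in G) 1%g (group1 G)) g.
Arguments to_gT {T}.
Definition brace_sol (T : finType) (G : {group {perm T}}) (B : brace_data T) : sol :=
  @Sol (gT G) (fun q =>
    let a := val q.1 in let b := val q.2 in let c := blam B a b in
    (to_gT G c, to_gT G (blam B (c^-1)%g a))).

Arguments brace_sol {T}.
(* phi : G(X,r) -> G(X,r)perm, x |-> sigma_x, is a brace homomorphism:
   on generators, lambda_{sigma_x}(sigma_y) = sigma_{sigma_x(y)} *)
Definition phi_brace_hom (S : sol) (B : brace_data (scar S)) : Prop :=
  forall x y : scar S, blam B (sigma_perm S x) (sigma_perm S y) = sigma_perm S (ssig S x y).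

(* Main.v *)
From HB Require Import structures.
Require Import Defs.
From mathcomp Require Import all_boot all_fingroup all_algebra.
Import GRing.Theory.
From mathcomp Require Import zify.

Lemma to_permE (T : finType) (f : T -> T) : injective f -> to_perm f =1 f.
Proof.
move=> injf z; rewrite /to_perm -pvalE.
have H : injectiveb [ffun x => f x].
  by apply/injectiveP => a b; rewrite !ffunE; apply: injf.
rewrite /insubd insubT /= ffunE. done.
Qed.

Definition CS (S : sol) : Prop :=
  (forall x, bijective (ssig S x)) /\
  (forall x y x', ssig S (ssig S x y) x' = x ->
     forall z, ssig S x (ssig S y z) = ssig S (ssig S x y) (ssig S x' z)).

Section CSTheory.
Variable S : sol.
Hypothesis HS : CS S.
Local Notation X := (scar S).
Local Notation s := (ssig S).

Lemma sigmaE (x : X) : sigma_perm S x =1 s x.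
Proof. by apply: to_permE; apply: bij_inj; case: HS. Qed.

Definition L (x : X) : X -> X := (sigma_perm S x)^-1%g.

Lemma sL x z : s x (L x z) = z.
Proof. by rewrite -sigmaE /L permKV. Qed.
Lemma Ls x z : L x (s x z) = z.
Proof. by rewrite -sigmaE /L permK. Qed.

Lemma sigf_eq x y : sigf S x = sigf S y <-> s x =1 s y.
Proof.
split=> [H z|H]; last by apply/ffunP => z; rewrite !ffunE.
by have := congr1 (fun f : {ffun X -> X} => f z) H; rewrite /sigf !ffunE.
Qed.

Lemma sigma_perm_eq x y : sigf S x = sigf S y -> sigma_perm S x = sigma_perm S y.
Proof. by rewrite /sigma_perm /to_perm /sigf => ->. Qed.

Definition pres (f : X -> X) := forall u v, sigf S u = sigf S v -> sigf S (f u) = sigf S (f v).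

Lemma presL a : pres (L a).
Proof.
move=> w w' Hw; apply/sigf_eq => z.
have key : forall w0, s (L a w0) z = L a (s w0 (s (L w0 a) z)).
  move=> w0; case: HS => _ H.
  have := H a (L a w0) (L w0 a); rewrite !sL => /(_ erefl z) <-.
  by rewrite Ls.
rewrite !key; move/sigf_eq: (Hw) => e; rewrite e.
by rewrite /L (sigma_perm_eq _ _ Hw).
Qed.

Lemma pres_s a : pres (s a).
Proof.
set p := (sigma_perm S a)^-1%g.
have Hp : forall k u v, sigf S u = sigf S v -> sigf S ((p ^+ k)%g u) = sigf S ((p ^+ k)%g v).
  elim=> [|k IH] u v H; first by rewrite !expg0 !perm1.
  by rewrite !expgSr !permM; apply: presL; apply: IH.
move=> u v H; rewrite -!sigmaE.
have -> : sigma_perm S a = (p ^-1)%g by rewrite invgK.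
by rewrite invg_expg; apply: Hp.
Qed.

End CSTheory.

Lemma rcls_eq (S : sol) x y : rcls S x = rcls S y <-> sigf S x = sigf S y.
Proof.
split=> [H|H].
  have : x \in val (rcls S y) by rewrite -H /= inE.
  by rewrite /= inE => /eqP.
apply: val_inj => /=; apply/setP => z; by rewrite !inE H.
Qed.

Lemma rcls_surj (S : sol) (c : retT S) : exists x, c = rcls S x.
Proof.
case: c => C HC; have := HC; move/imsetP => [x _ Ex].
by exists x; apply: val_inj => /=.
Qed.

Lemma retsig (S : sol) : CS S -> forall x z,
  ssig (Ret S) (rcls S x) (rcls S z) = rcls S (ssig S x z).
Proof.
move=> HS x z; rewrite /ssig /= /retmap /=.
case: pickP => [x0 Hx0|H]; last by have := H x; rewrite inE eqxx.
case: pickP => [z0 Hz0|H]; last by have := H z; rewrite inE eqxx.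
move: Hx0 Hz0; rewrite !inE => /eqP Hx /eqP Hz /=.
apply/rcls_eq; move/sigf_eq: Hx => Hx; rewrite (Hx z0).
exact: pres_s.
Qed.

Lemma CS_Ret (S : sol) : CS S -> CS (Ret S).
Proof.
move=> HS; split.
  move=> c; apply: injF_bij => d1 d2.
  have [x ->] := rcls_surj _ c; have [y1 ->] := rcls_surj _ d1; have [y2 ->] := rcls_surj _ d2.
  rewrite !retsig // => /rcls_eq H; apply/rcls_eq.
  by have := presL _ HS x _ _ H; rewrite !Ls.
move=> c d c'.
have [x ->] := rcls_surj _ c; have [y ->] := rcls_surj _ d; have [x' ->] := rcls_surj _ c'.
rewrite !retsig // => /rcls_eq H e.
have [z ->] := rcls_surj _ e.
rewrite !retsig //.
set u := ssig S x y.
have Hx'' : ssig S u (L S u x) = x by rewrite sL.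
have [Hb HC] := HS.
have H2 : sigf S x' = sigf S (L S u x).
  by have := presL _ HS u _ _ H; rewrite Ls.
move/sigf_eq: H2 => H2; by rewrite (HC _ _ _ Hx'' z) -H2.
Qed.

Fixpoint Erel (S : sol) (k : nat) (x y : scar S) : Prop :=
  match k with 0 => x = y | k'.+1 => forall z, Erel S k' (ssig S x z) (ssig S y z) end.

Lemma Erel_Ret (S : sol) : CS S -> forall k x y,
  Erel (Ret S) k (rcls S x) (rcls S y) <-> Erel S k.+1 x y.
Proof.
move=> HS; elim=> [|k IH] x y /=.
  split=> [/rcls_eq/sigf_eq H z|H]; [exact: H | apply/rcls_eq/sigf_eq; exact: H].
split=> H z.
  by apply/IH; rewrite -!retsig //; apply: H.
have [w ->] := rcls_surj _ z; rewrite !retsig //; apply/IH; exact: H.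
Qed.

Lemma card_iter1 : forall k (S : sol), CS S -> (exists x : scar S, True) ->
  (#|{: scar (iter k Ret S)}| = 1 <-> forall x y, Erel S k x y).
Proof.
elim=> [|k IH] S HS [x0 _] /=.
  split=> [/eqP/card1P [a Ha] x y|H].
    have Hx : x == a by have := Ha x; rewrite !inE.
    have Hy : y == a by have := Ha y; rewrite !inE.
    by rewrite (eqP Hx) (eqP Hy).
  by apply: (eq_card1 (x := x0)) => y; rewrite !inE; apply/esym/eqP/H.
have -> : #|{: scar (iter k.+1 Ret S)}| = #|{: scar (iter k Ret (Ret S))}|.
  by rewrite iterSr.
have IH' := IH (Ret S) (CS_Ret S HS) (ex_intro _ (rcls S x0) I).
split=> H.
  by move=> x y; apply/(Erel_Ret _ HS); apply: (proj1 IH' H).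
apply: (proj2 IH') => c d; have [x ->] := rcls_surj _ c; have [y ->] := rcls_surj _ d.
by apply/(Erel_Ret _ HS); apply: H.
Qed.

Definition reach (S : sol) := forall x y : scar S,
  exists s : seq (scar S), y = foldl (fun z a => ssig S a z) x s.

Lemma reach_Ret (S : sol) : CS S -> reach S -> reach (Ret S).
Proof.
move=> HS HR c d; have [x ->] := rcls_surj _ c; have [y ->] := rcls_surj _ d.
have [s ->] := HR x y; exists (map (rcls S) s).
elim: s x => [|a s IH] x //=.
by rewrite IH retsig.
Qed.

Lemma class_le (S : sol) : CS S -> forall a x,
  #|retcls S x| <= #|retcls S (ssig S a x)|.
Proof.
move=> HS a x.
have inj : injective (ssig S a) by apply: bij_inj; case: HS.
rewrite -(card_imset _ inj); apply: subset_leq_card.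
apply/subsetP => w /imsetP [v Hv ->]; move: Hv; rewrite !inE => /eqP Hv.
by apply/eqP; apply: pres_s.
Qed.

Lemma class_eq (S : sol) : CS S -> reach S -> forall x y,
  #|retcls S x| = #|retcls S y|.
Proof.
move=> HS HR.
have H : forall x y, #|retcls S x| <= #|retcls S y|.
  move=> x y; have [s ->] := HR x y.
  elim: s x => [|a s IH] x //=.
  exact: leq_trans (class_le _ HS a x) (IH _).
by move=> x y; apply/eqP; rewrite eqn_leq !H.
Qed.

Lemma card_S (S : sol) : CS S -> reach S -> forall x0,
  #|{: scar S}| = #|{: retT S}| * #|retcls S x0|.
Proof.
move=> HS HR x0.
rewrite -[LHS]sum1_card (partition_big (rcls S) predT) //=.
rewrite -sum_nat_const.

apply: eq_big => // c _.
have [z ->] := rcls_surj _ c.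
rewrite (class_eq _ HS HR x0 z) -sum1_card; apply: eq_bigl => x.
rewrite inE; apply/eqP/eqP => /rcls_eq //.
Qed.

Lemma Ret_card (S : sol) : CS S -> reach S -> forall x0 : scar S,
  #|{: scar (Ret S)}| %| #|{: scar S}| /\
  (#|{: scar (Ret S)}| = #|{: scar S}| -> #|{: scar (Ret (Ret S))}| = #|{: scar (Ret S)}|).
Proof.
move=> HS HR x0; have E := card_S _ HS HR x0; split; first by rewrite E dvdn_mulr.
move=> Eq.
have c1 : #|retcls S x0| = 1.
  have pos : 0 < #|{: scar S}| by apply/card_gt0P; exists x0.
  move: E; rewrite /= in Eq; rewrite -Eq => E.
  have pos' : 0 < #|{: retT S}| by rewrite Eq.
  by apply/eqP; rewrite -(eqn_pmul2l pos') muln1 -E.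
have inj : injective (rcls S).
  move=> x y /rcls_eq H.
  have Hc : #|retcls S x| <= 1 by rewrite (class_eq _ HS HR x x0) c1.
  have Hx : x \in retcls S x by rewrite inE.
  have Hy : y \in retcls S x by rewrite inE H.
  by have := (card_le1P Hc) x Hx y; rewrite Hy inE => /esym/eqP.
have injR : injective (rcls (Ret S)).
  move=> c d; have [x ->] := rcls_surj _ c; have [y ->] := rcls_surj _ d.
  move/rcls_eq/sigf_eq => H; apply/rcls_eq/sigf_eq => z.
  apply: inj; have := H (rcls S z); rewrite !retsig //.
have HS' := CS_Ret _ HS; have HR' := reach_Ret _ HS HR.
have E' := card_S _ HS' HR' (rcls S x0).
have pos : 0 < #|retcls (Ret S) (rcls S x0)| by apply/card_gt0P; exists (rcls S x0); rewrite inE.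
apply/eqP; rewrite eqn_leq; apply/andP; split.
  by rewrite [X in _ <= X]E' leq_pmulr.
exact: leq_card injR.
Qed.

Definition Om (N m : nat) := \sum_(q < N) logn q m.

Lemma OmM N a b : 0 < a -> 0 < b -> Om N (a * b) = Om N a + Om N b.
Proof. by move=> a0 b0; rewrite /Om -big_split /=; apply: eq_bigr => q _; rewrite lognM. Qed.

Lemma Om1 N : Om N 1 = 0.
Proof. by rewrite /Om big1 // => q _; rewrite logn1. Qed.

Lemma Om_prime N p : prime p -> p < N -> Om N p = 1.
Proof.
move=> pp lt; rewrite /Om (bigD1 (Ordinal lt)) //= logn_prime // eqxx big1 // => q.
rewrite logn_prime // => /negbTE Hq; apply/eqP; rewrite eqb0; apply/negP => /eqP E.
by rewrite -(inj_eq val_inj) /= E eqxx in Hq.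
Qed.

Lemma Om_gt0 N m : 1 < m -> m < N -> 0 < Om N m.
Proof.
move=> m1 mN; rewrite /Om.
have lt : pdiv m < N by apply: leq_ltn_trans (dvdn_leq (ltnW m1) (pdiv_dvd m)) mN.
rewrite (bigD1 (Ordinal lt)) //= ltn_addr // logn_gt0 mem_primes pdiv_prime //.
by rewrite (ltnW m1) pdiv_dvd.
Qed.

Lemma Om_lt N d m : 0 < m -> d %| m -> d < m -> m < N -> Om N d < Om N m.
Proof.
move=> m0 dm dlt mN.
have d0 : 0 < d by apply: dvdn_gt0 dm; [exact: m0].
have Em : m = d * (m %/ d) by rewrite mulnC divnK.
have e0 : 0 < m %/ d by rewrite divn_gt0 // dvdn_leq.
have e1 : 1 < m %/ d.
  rewrite ltn_neqAle e0 andbT; apply/negP => /eqP E1.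
  by move: dlt; rewrite Em -E1 muln1 ltnn.
have eN : m %/ d < N by apply: leq_ltn_trans (leq_div _ _) mN.
by rewrite Em OmM // -addn1 leq_add2l Om_gt0.
Qed.

Lemma Om_prod N (I : finType) (P : I -> nat) : (forall i, 0 < P i) ->
  Om N (\prod_i P i) = \sum_i Om N (P i).
Proof.
move=> Ppos.
suff: 0 < \prod_i P i /\ Om N (\prod_i P i) = \sum_i Om N (P i) by case.
apply: (big_ind2 (fun a b => 0 < a /\ Om N a = b)).
- by rewrite Om1.
- by move=> a b c d [a0 <-] [c0 <-]; rewrite muln_gt0 a0 c0 OmM.
- by move=> i _; split.
Qed.


Lemma num_main (s : nat -> nat) n : 0 < n ->
  (forall j, 0 < s j) -> (forall j, s j.+1 %| s j) ->
  (forall j, s j.+1 = s j -> s j.+2 = s j.+1) ->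
  Om (s 0).+1 (s 0) = n ->
  (exists k, 0 < k /\ s k = 1) ->
  exists m, 0 < m <= n /\ s m = 1.
Proof.
move=> n0 spos sdvd sc E [k [k0 sk]].
set N := (s 0).+1.
have sle : forall j, s j.+1 <= s j by move=> j; apply: dvdn_leq.
have dec : forall j, s j <= s 0.
  by elim=> // j IH; apply: leq_trans (sle j) IH.
have const : forall j t, s j.+1 = s j -> s (j + t) = s j.
  move=> j t Eq.
  have H1 : forall t, s (j + t).+1 = s (j + t).
    by elim=> [|t' IH]; [rewrite addn0 | rewrite addnS sc].
  elim: t => [|t IH]; first by rewrite addn0.
  by rewrite addnS H1.
have claim : forall j, (forall i, i <= j -> s i != 1) -> Om N (s j) + j <= n.
  elim=> [|j IH] H; first by rewrite addn0 E.
  have ne : s j.+1 != s j.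
    apply/eqP => Eq.
    case: (leqP j k) => jk.
      have := const j (k - j) Eq; rewrite subnKC // sk => Esj.
      by have := H j (leqnSn j); rewrite -Esj eqxx.
    by have := H k (leqW (ltnW jk)); rewrite sk eqxx.
  have lt : s j.+1 < s j by rewrite ltn_neqAle ne sle.
  have := Om_lt N _ _ (spos j) (sdvd j) lt (dec j : s j < N).
  have := IH (fun i hi => H i (leqW hi)).
  lia.
case: (boolP [exists i : 'I_n.+1, s i == 1]).
  move/existsP => [i /eqP si]; exists (maxn i 1); split.
    by rewrite leq_maxr /= geq_max n0 -ltnS ltn_ord.
  case: (posnP i) => [i0|ip].
    rewrite i0 /= in si *; have := sdvd 0; rewrite si dvdn1 => /eqP //.
  by rewrite (maxn_idPl ip).
move/existsPn => Hn.
have := claim n (fun i hi => Hn (Ordinal (hi : i < n.+1))).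
have : 1 < s n by have := spos n; have := Hn (Ordinal (ltnSn n)); rewrite /=; lia.
move=> s1; have := Om_gt0 N _ s1 (dec n : s n < N); lia.
Qed.

Lemma sol_CS (S : sol) : is_solution S -> CS S.
Proof.
case=> Hinv Hs Hg Hybe; split=> // x y x' Hx' z.
have Hinv' : ssig S (ssig S x y) (sgam S y x) = x.
  rewrite /ssig /sgam; case E: (smap S (x, y)) => [a b] /=.
  by have := Hinv (x, y); rewrite E => ->.
have ex' : x' = sgam S y x.
  by apply: (bij_inj (Hs (ssig S x y))); rewrite Hx' Hinv'.
rewrite ex'; have := Hybe (x, y, z); rewrite /r12 /r23 /ssig /sgam.
case E1: (smap S (x, y)) => [a b] /=.
case E2: (smap S (b, z)) => [c d] /=.
case E3: (smap S (a, c)) => [e f] /=.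
case E4: (smap S (y, z)) => [g h] /=.
case E5: (smap S (x, g)) => [i j] /=.
case E6: (smap S (j, h)) => [k l] /=.
by move=> [] -> _ _.
Qed.

Lemma indec_reach (S : sol) : is_solution S -> indecomposable S -> reach S.
Proof.
move=> HS Hind x y.
have HC := sol_CS _ HS.
have [g Hg ->] := atransP2 Hind (in_setT x) (in_setT y).
rewrite /=.
move: Hg => /gen_prodgP [m [c Hc ->]].
suff : exists s, forall x, (\prod_i c i)%g x = foldl (fun z a => ssig S a z) x s.
  by case=> s Hs; exists s; rewrite -Hs.
elim: m c Hc => [|m IH] c Hc.
  by exists [::] => x0; rewrite big_ord0 perm1.
have [s Hs] := IH (fun i => c (widen_ord (leqnSn m) i)) (fun i => Hc _).
have := Hc ord_max; case/imsetP => a _ Ea.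
exists (rcons s a) => x0.
by rewrite big_ord_recr /= permM Hs foldl_rcons Ea sigmaE.
Qed.

Lemma iter_props (S : sol) : is_solution S -> indecomposable S -> forall j,
  [/\ CS (iter j Ret S), reach (iter j Ret S) & exists x : scar (iter j Ret S), True].
Proof.
move=> HS Hind; elim=> [|j [IH1 IH2 [x _]]] /=.
  split; [exact: sol_CS | exact: indec_reach |].
  by case/imsetP: Hind => x _ _; exists x.
split; [exact: CS_Ret | exact: reach_Ret | by exists (rcls _ x)].
Qed.

Lemma part1 (n : nat) (p : 'I_n -> nat) (S : sol) :
  (0 < n)%N ->
  (forall i, prime (p i)) ->
  #|{: scar S}| = (\prod_(i < n) p i)%N ->
  is_solution S -> indecomposable S -> multipermutation S ->
  exists m, 0 < m <= n /\ #|{: scar (iter m Ret S)}| = 1.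
Proof.
move=> n0 pp Ecard HS Hind [k [k0 Hk]].
have IP := iter_props _ HS Hind.
pose s j := #|{: scar (iter j Ret S)}|.
apply: (num_main s) => //.
- by move=> j; case: (IP j) => _ _ [x _]; apply/card_gt0P; exists x.
- move=> j; case: (IP j) => H1 H2 [x _]; rewrite /s iterS.
  by case: (Ret_card _ H1 H2 x).
- move=> j; case: (IP j) => H1 H2 [x _]; rewrite /s !iterS.
  by case: (Ret_card _ H1 H2 x).
- rewrite /s /= Ecard Om_prod; last by move=> i; apply: prime_gt0.
  have ppos : 0 < \prod_(i < n) p i by apply: prodn_gt0 => i; apply: prime_gt0.
  rewrite (eq_bigr (fun _ => 1)); first by rewrite sum1_card card_ord.
  move=> i _; apply: Om_prime => //; rewrite ltnS; apply: dvdn_leq => //.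
  by rewrite (bigD1 i) //= dvdn_mulr.
- by exists k.
Qed.

Lemma Erel_refl (S : sol) k x : Erel S k x x.
Proof. by elim: k x => //= k IH x z. Qed.
Lemma Erel_sym (S : sol) k x y : Erel S k x y -> Erel S k y x.
Proof. by elim: k x y => //= k IH x y H z; apply: IH. Qed.
Lemma Erel_trans (S : sol) k x y w : Erel S k x y -> Erel S k y w -> Erel S k x w.
Proof. by elim: k x y w => [|k IH] x y w /=; [move=> -> | move=> H1 H2 z; apply: IH (H1 z) (H2 z)]. Qed.
Lemma Erel_mono (S : sol) k x y : Erel S k x y -> Erel S k.+1 x y.
Proof.
elim: k x y => [|k IH] x y /=; first by move=> -> z.
by move=> H z; apply: IH.
Qed.

Section Brace.
Variable T : finType.
Variable G : {group {perm T}}.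
Variable B : brace_data T.
Hypothesis HB : is_left_brace_on G B.

Definition Gt : Type := Finite.sort (gT G).
HB.instance Definition _ := Finite.on Gt.

Definition gadd (a b : Gt) : Gt := to_gT G (badd B (val a) (val b)).
Definition gopp (a : Gt) : Gt := to_gT G (bopp B (val a)).
Definition gzero : Gt := to_gT G (bzero B).

Lemma to_gTK g : g \in G -> val (to_gT G g) = g.
Proof. by move=> Hg; rewrite /to_gT val_insubd Hg. Qed.

Lemma vadd a b : val (gadd a b) = badd B (val a) (val b).
Proof. have [[_ Had _ _] _] := HB; rewrite to_gTK //; apply: Had; apply: valP. Qed.
Lemma vopp a : val (gopp a) = bopp B (val a).
Proof. have [[_ _ Hop _] _] := HB; rewrite to_gTK //; apply: Hop; apply: valP. Qed.
Lemma vzero : val gzero = bzero B.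
Proof. have [[Hz _ _ _] _] := HB; by rewrite to_gTK. Qed.

Lemma gaddA : associative gadd.
Proof. have [[_ _ _ Has] _] := HB; move=> a b c; apply: val_inj; by rewrite !vadd Has //; apply: valP. Qed.
Lemma gaddC : commutative gadd.
Proof. have [_ [Hcm _ _ _]] := HB; move=> a b; apply: val_inj; by rewrite !vadd Hcm //; apply: valP. Qed.
Lemma gadd0 : left_id gzero gadd.
Proof. have [_ [_ H0 _ _]] := HB; move=> a; apply: val_inj; by rewrite !vadd vzero H0 //; apply: valP. Qed.
Lemma gaddN : left_inverse gzero gopp gadd.
Proof. have [_ [_ _ HN _]] := HB; move=> a; apply: val_inj; by rewrite !vadd vopp vzero HN //; apply: valP. Qed.

HB.instance Definition _ := GRing.isZmodule.Build Gt gaddA gaddC gadd0 gaddN.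

Local Open Scope ring_scope.

Definition gmul (a b : Gt) : Gt := to_gT G (val b * val a)%g.
Definition ginv (a : Gt) : Gt := to_gT G (val a)^-1%g.
Definition gone : Gt := to_gT G 1%g.
Definition glam (a b : Gt) : Gt := to_gT G (blam B (val a) (val b)).

Lemma vmul a b : val (gmul a b) = (val b * val a)%g.
Proof. rewrite to_gTK //; apply: groupM; apply: valP. Qed.
Lemma vinv a : val (ginv a) = (val a)^-1%g.
Proof. rewrite to_gTK //; rewrite groupV; apply: valP. Qed.
Lemma vone : val gone = 1%g.
Proof. by rewrite to_gTK. Qed.

Lemma gmulA a b c : gmul a (gmul b c) = gmul (gmul a b) c.
Proof. by apply: val_inj; rewrite !vmul mulgA. Qed.
Lemma gmul1 a : gmul gone a = a.
Proof. by apply: val_inj; rewrite vmul vone mulg1. Qed.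
Lemma gmulV a : gmul a (ginv a) = gone.
Proof. by apply: val_inj; rewrite vmul vinv vone mulVg. Qed.
Lemma gmulVl a : gmul (ginv a) a = gone.
Proof. by apply: val_inj; rewrite vmul vinv vone mulgV. Qed.

Lemma gbr a b c : gmul a (b + c) + a = gmul a b + gmul a c.
Proof.
have [_ [_ _ _ Hbr]] := HB; apply: val_inj.
have -> : (b + c) = gadd b c by [].
have -> : forall x y : Gt, x + y = gadd x y by [].
rewrite !vadd !vmul vadd -Hbr //; apply: valP.
Qed.

Lemma gzero1 : 0 = gone.
Proof.
have H : forall a, gmul a 0 = a.
  move=> a; have := gbr a 0 0; rewrite addr0 => /addrI; done.
by rewrite -(H gone); apply: val_inj; rewrite vmul vone mulg1.
Qed.

Lemma glamE a b : glam a b = - a + gmul a b.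
Proof.
apply: val_inj; rewrite /glam to_gTK; last first.
  have [[_ Had Hop _] _] := HB; apply: Had; [apply: Hop; apply: valP|].
  apply: groupM; apply: valP.
have -> : - a + gmul a b = gadd (gopp a) (gmul a b) by [].
by rewrite vadd vopp vmul.
Qed.

Lemma gmulE a b : gmul a b = a + glam a b.
Proof. by rewrite glamE addNKr. Qed.

Lemma glamD a b c : glam a (b + c) = glam a b + glam a c.
Proof.
rewrite !glamE; have := gbr a b c => /(congr1 (fun x => x - a)); rewrite addrK => ->.
by rewrite !addrA addrAC.
Qed.

Lemma glam0 a : glam a 0 = 0.
Proof. by have := glamD a 0 0; rewrite addr0 -{1}[glam a 0]addr0 => /addrI <-. Qed.

Lemma glamN a c : glam a (- c) = - glam a c.
Proof. by apply/eqP; rewrite -addr_eq0 -glamD addNr glam0. Qed.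

Lemma glamM a b c : glam (gmul a b) c = glam a (glam b c).
Proof.
apply: (@addrI _ (gmul a b)); rewrite -gmulE -gmulA (gmulE b c).
apply: (@addIr _ a); rewrite gbr (gmulE a (glam b c)).
by rewrite -addrA [a + _]addrC.
Qed.

Lemma glam1 c : glam gone c = c.
Proof. by rewrite glamE gmul1 -gzero1 oppr0 add0r. Qed.

Lemma glamK a c : glam a (glam (ginv a) c) = c.
Proof. by rewrite -glamM gmulV glam1. Qed.
Lemma glamKV a c : glam (ginv a) (glam a c) = c.
Proof. by rewrite -glamM gmulVl glam1. Qed.

Lemma gaddE a b : a + b = gmul a (glam (ginv a) b).
Proof. by rewrite gmulE glamK. Qed.

Lemma glam0l c : glam 0 c = c.
Proof. by rewrite gzero1 glam1. Qed.

Definition EB k (a b : Gt) := Erel (brace_sol G B) k a b.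

Lemma EBS k a b : EB k.+1 a b <-> forall c, EB k (glam a c) (glam b c).
Proof. by []. Qed.

Lemma Qk k : (forall u a b, EB k a b -> EB k (glam u a) (glam u b)) /\
  (forall a a' b b', EB k a a' -> EB k b b' -> EB k (a + b) (a' + b')).
Proof.
elim: k => [|k [K2 K3]].
  by split; [move=> u a b -> | move=> a a' b b' -> ->].
have Er : forall a, EB k a a by move=> a; apply: Erel_refl.
have Es : forall a b, EB k a b -> EB k b a by move=> a b; apply: Erel_sym.
have Et : forall a b c, EB k a b -> EB k b c -> EB k a c by move=> a b c; apply: Erel_trans.
have Es' : forall a b, EB k.+1 a b -> EB k.+1 b a by move=> a b; apply: Erel_sym.
have K4 : forall a a', EB k a a' -> EB k (- a) (- a').
  move=> a a' H; have := K3 _ _ _ _ (Er (- a - a')) H.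
  by rewrite addrNK addrAC addNr add0r; apply: Es.
pose I j := forall d, EB k (glam j d) d.
have s1 : forall a a', EB k.+1 a a' -> I (gmul (ginv a) a').
  move=> a a' H d; rewrite glamM.
  by have := K2 (ginv a) _ _ (Es _ _ (H d)); rewrite glamKV.
have LI : forall u j, I j -> I (glam u j).
  move=> u j Ij.
  pose e := gmul u (glam j (ginv u)).
  have He : EB k e 0.
    rewrite /e gmulE gzero1 -(gmulV u) (gmulE u (ginv u)).
    by apply: K3; [apply: Er | apply: K2; apply: Ij].
  pose ujU := gmul u (gmul j (ginv u)).
  have Hid : ujU = glam u j + e.
    apply: (@addIr _ u); rewrite /ujU (gmulE j (ginv u)) gbr /e (gmulE u j).
    by rewrite -addrA addrC.
  have Hf : EB k (- e) 0 by have := K4 _ _ He; rewrite oppr0.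
  have Hlu : glam u j = ujU + - e by rewrite Hid addrK.
  pose f' := glam (ginv ujU) (- e).
  have Hf' : EB k f' 0 by have := K2 (ginv ujU) _ _ Hf; rewrite glam0.
  move=> d; rewrite Hlu gaddE -/f' glamM.
  apply: (Et _ (glam ujU d)); first apply: K2.
    by have := (proj1 (EBS _ _ _) (Erel_mono _ _ _ _ Hf')) d; rewrite glam0l.
  rewrite /ujU !glamM.
  by have := K2 u _ _ (Ij (glam (ginv u) d)); rewrite glamK.
have s3 : forall x i, I i -> EB k.+1 (x + i) x.
  move=> x i Ii; apply/EBS => d; rewrite gaddE glamM.
  by apply: K2; apply: LI.
have s4 : forall x x', EB k.+1 x x' -> exists i, I i /\ x' = x + i.
  move=> x x' H; exists (glam x (gmul (ginv x) x')); split.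
    by apply: LI; apply: s1.
  by rewrite -gmulE gmulA gmulV gmul1.
have s5 : forall i i', I i -> I i' -> I (i + i').
  move=> i i' Ii Ii' d; rewrite gaddE glamM.
  by apply: Et (K2 i _ _ (LI _ _ Ii' d)) (Ii d).
split.
  move=> u a b /s4 [i [Ii ->]]; rewrite glamD.
  by apply: Es'; apply: s3; apply: LI.
move=> a a' b b' /s4 [i [Ii ->]] /s4 [i' [Ii' ->]].
have -> : a + i + (b + i') = (a + b) + (i + i').
  by rewrite -!addrA (addrCA i).
by apply: Es'; apply: s3; apply: s5.
Qed.

Lemma K4k k a a' : EB k a a' -> EB k (- a) (- a').
Proof.
move=> H; have [_ K3] := Qk k.
have := K3 _ _ _ _ (Erel_refl (brace_sol G B) k (- a - a')) H.
by rewrite addrNK addrAC addNr add0r; apply: Erel_sym.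
Qed.

Lemma CS_brace : CS (brace_sol G B).
Proof.
split.
  move=> a; apply: injF_bij => c1 c2 H.
  have H' : glam a c1 = glam a c2 := H.
  have : glam (ginv a) (glam a c1) = glam (ginv a) (glam a c2) by rewrite H'.
  by rewrite !glamKV.
move=> a b a' H z.
have H' : glam (glam a b) a' = a := H.
change (glam a (glam b z) = glam (glam a b) (glam a' z)).
rewrite -!glamM.
have -> : gmul a b = gmul (glam a b) a'.
  by rewrite gmulE addrC (gmulE (glam a b)) H'.
done.
Qed.

Lemma vlam a b : val (glam a b) = blam B (val a) (val b).
Proof.
rewrite /glam to_gTK //.
have [[_ Had Hop _] _] := HB; apply: Had; [apply: Hop; apply: valP|].
apply: groupM; apply: valP.
Qed.

Lemma glamDg a b c : glam a (gadd b c) = gadd (glam a b) (glam a c).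
Proof. exact: glamD. Qed.
Lemma glamNg a c : glam a (gopp c) = gopp (glam a c).
Proof. exact: glamN. Qed.
Lemma glam0g a : glam a gzero = gzero.
Proof. exact: glam0. Qed.
Lemma gzero1g : gzero = gone.
Proof. exact: gzero1. Qed.
Lemma gmulEg a b : gmul a b = gadd a (glam a b).
Proof. exact: gmulE. Qed.
Lemma K3g k a a' b b' : EB k a a' -> EB k b b' -> EB k (gadd a b) (gadd a' b').
Proof. exact: (proj2 (Qk k)). Qed.
Lemma K4g k a a' : EB k a a' -> EB k (gopp a) (gopp a').
Proof. exact: K4k. Qed.

End Brace.

Arguments Gt {T}. Arguments to_gTK {T G}.
Arguments glam {T G}. Arguments gadd {T G}. Arguments gopp {T G}. Arguments gzero {T G}.
Arguments gmul {T G}. Arguments gone {T}. Arguments EB {T G}.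
Arguments vmul {T G}. Arguments vone {T G}.
Arguments vlam {T G B}. Arguments glamDg {T G B}. Arguments glamNg {T G B}.
Arguments glam0g {T G B}. Arguments gzero1g {T G B}. Arguments gmulEg {T G B}.
Arguments glamM {T G B}. Arguments glam1 {T G B}. Arguments K3g {T G B}. Arguments K4g {T G B}.
Arguments CS_brace {T G B}. Arguments EBS {T G B}.

Section Link.
Variable S : sol.
Hypothesis HS : is_solution S.
Variable B : brace_data (scar S).
Hypothesis HB : is_left_brace_on (Ggrp S) B.
Hypothesis Hphi : phi_brace_hom S B.

Local Notation G := (Ggrp S).
Local Notation GT := (Gt G).

Let HCS := sol_CS S HS.

Definition sg (y : scar S) : GT := to_gT G (sigma_perm S y).

Lemma vsg y : val (sg y) = sigma_perm S y.
Proof. by rewrite to_gTK //; apply: mem_gen; apply/imsetP; exists y. Qed.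

Lemma base x y : glam B (sg x) (sg y) = sg (ssig S x y).
Proof. by apply: val_inj; rewrite (vlam HB) !vsg Hphi. Qed.

Lemma L1 (g : GT) y : glam B g (sg y) = sg (val g y).
Proof.
move: (valP g) => /gen_prodgP [m [c Hc E]].
elim: m c Hc g E y => [|m IH] c Hc g E y.
  have -> : g = gone G by apply: val_inj; apply: (etrans E); rewrite vone big_ord0.
  by rewrite (glam1 HB) vone perm1.
move: E; rewrite big_ord_recr /= => E.
set P := (\prod_(i < m) c (widen_ord (leqnSn m) i))%g in E.
have PG : P \in G by apply: group_prod => i _; apply: mem_gen; apply: Hc.
have [x _ Ex] := imsetP (Hc ord_max).
have -> : g = gmul (sg x) (to_gT G P).
  by apply: val_inj; apply: (etrans E); rewrite vmul vsg to_gTK // Ex.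
rewrite (glamM HB) (IH (fun i => c (widen_ord (leqnSn m) i))) //; last by rewrite to_gTK.
by rewrite base vmul to_gTK // vsg permM sigmaE.
Qed.

Inductive inA : GT -> Prop :=
| inA_s y : inA (sg y)
| inA_0 : inA (gzero B)
| inA_D a b : inA a -> inA b -> inA (gadd B a b)
| inA_N a : inA a -> inA (gopp B a).

Lemma inA_lam x a : inA a -> inA (glam B (sg x) a).
Proof.
elim=> [y| |a1 b1 _ IH1 _ IH2|a1 _ IH1].
- by rewrite base; apply: inA_s.
- by rewrite (glam0g HB); apply: inA_0.
- by rewrite (glamDg HB); apply: inA_D.
- by rewrite (glamNg HB); apply: inA_N.
Qed.

Lemma inA_all (g : GT) : inA g.
Proof.
move: (valP g) => /gen_prodgP [m [c Hc E]].
elim: m c Hc g E => [|m IH] c Hc g E.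
  have -> : g = gone G by apply: val_inj; apply: (etrans E); rewrite vone big_ord0.
  by rewrite -(gzero1g HB); apply: inA_0.
move: E; rewrite big_ord_recr /= => E.
set P := (\prod_(i < m) c (widen_ord (leqnSn m) i))%g in E.
have PG : P \in G by apply: group_prod => i _; apply: mem_gen; apply: Hc.
have [x _ Ex] := imsetP (Hc ord_max).
have -> : g = gmul (sg x) (to_gT G P).
  by apply: val_inj; apply: (etrans E); rewrite vmul vsg to_gTK // Ex.
rewrite (gmulEg HB); apply: inA_D; first exact: inA_s.
apply: inA_lam; apply: (IH (fun i => c (widen_ord (leqnSn m) i))) => //.
by rewrite to_gTK.
Qed.

Lemma Gb k : forall g h : GT, (forall y, Erel S k (val g y) (val h y)) -> EB B k g h.
Proof.
elim: k => [|k IH] g h H.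
  by apply: val_inj; apply/permP => y; apply: H.
apply/EBS => c; elim: (inA_all c) => [y| |a b _ IHa _ IHb|a _ IHa].
- rewrite !L1; apply: IH => z; rewrite !vsg !(sigmaE _ HCS); exact: (H y z).
- by rewrite !(glam0g HB); apply: Erel_refl.
- by rewrite !(glamDg HB); apply: K3g.
- by rewrite !(glamNg HB); apply: K4g.
Qed.

End Link.

Theorem corollary4p2 (n : nat) (p : 'I_n -> nat) (S : sol) :
  (0 < n)%N ->
  (forall i, prime (p i)) -> injective p ->
  #|{: scar S}| = (\prod_(i < n) p i)%N ->
  is_solution S -> indecomposable S -> multipermutation S ->
  mpl_le S n /\
  (forall B : brace_data (scar S),
     is_left_brace_on (Ggrp S) B -> phi_brace_hom S B ->
     mpl_le (brace_sol (Ggrp S) B) n).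
Proof.
move=> n0 pp injp Ec HS Hind Hmp.
have [m [Hm Hc]] := part1 n p S n0 pp Ec HS Hind Hmp.
split; first by exists m.
move=> B HB Hphi; exists m; split => //.
have HCS := sol_CS S HS.
have [_ _ neS] := iter_props S HS Hind 0.
have Etot := proj1 (card_iter1 m S HCS neS) Hc.
apply: (proj2 (card_iter1 m (brace_sol (Ggrp S) B) (CS_brace HB) (ex_intro _ (gone (Ggrp S)) I))).
move=> a b; exact: (@Gb S HS B HB Hphi m a b (fun y => Etot _ _)).
Qed.
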